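(* Let $k\ge 2$ and let $G$ be a $k$-regular bipartite graph. Then $\chi_{ei}(G)=2$.
   Context: All graphs are finite and simple. A path $P_4$ in $G$ is a sequence $uxyv$ of four distinct vertices with $ux,xy,yv\in E(G)$; $u,v$ are its end vertices. An $e$-injective $k$-coloring of $G$ is a function $f:V(G)\to\{1,\dots,k\}$ with $f(u)\ne f(v)$ whenever $u,v$ are the end vertices of some path $P_4$ in $G$; $\chi_{ei}(G)$ is the least such $k$. *)

(* Defs.v *)
From mathcomp Require Import all_boot.
Set Implicit Arguments. Unset Strict Implicit. Unset Printing Implicit Defensive.

Definition simple_graph (T : finType) (e : rel T) : Prop :=
  symmetric e /\ irreflexive e.

Definition P4_ends (T : finType) (e : rel T) (u v : T) : bool :=
  [exists x : T, exists y : T,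
     [&& e u x, e x y, e y v & uniq [:: u; x; y; v]]].

Definition e_injective_coloring (T : finType) (e : rel T) (k : nat)
  (f : T -> 'I_k) : Prop :=
  forall u v, P4_ends e u v -> f u != f v.

Definition has_ei_coloring (T : finType) (e : rel T) (k : nat) : bool :=
  [exists f : {ffun T -> 'I_k},
     [forall u, forall v, P4_ends e u v ==> (f u != f v)]].

Lemma has_ei_coloringP (T : finType) (e : rel T) (k : nat) :
  reflect (exists f : T -> 'I_k, e_injective_coloring e f)
          (has_ei_coloring e k).
Proof.
apply: (iffP existsP) => [[f /forallP Hf]|[f Hf]].
  exists f => u v Huv; by move: (Hf u) => /forallP /(_ v) /implyP; apply.
exists [ffun x => f x]; apply/forallP => u; apply/forallP => v.
by apply/implyP => /Hf; rewrite !ffunE.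
Qed.

Lemma has_ei_coloring_card (T : finType) (e : rel T) :
  exists k, has_ei_coloring e k.
Proof.
exists #|T|; apply/has_ei_coloringP; exists (@enum_rank T) => u v.
rewrite /P4_ends => /existsP [x /existsP [y /and4P [_ _ _ Hu]]].
apply/negP => /eqP /enum_rank_inj Euv; move: Hu; rewrite Euv /=.
by rewrite !inE eqxx !orbT.
Qed.

Definition chi_ei (T : finType) (e : rel T) : nat :=
  ex_minn (has_ei_coloring_card e).

Definition regular (T : finType) (e : rel T) (k : nat) : Prop :=
  forall v : T, #|[set w | e v w]| = k.

Definition bipartite (T : finType) (e : rel T) : Prop :=
  exists A : {set T}, forall u v, e u v -> (u \in A) != (v \in A).

(* Main.v *)
Require Import Defs.
From mathcomp Require Import all_boot.

Lemma other_elt (T : finType) (S : {set T}) (z : T) :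
  1 < #|S| -> exists w, (w \in S) && (w != z).
Proof.
move=> H; apply/existsP; apply: contraLR H; rewrite negb_exists => /forallP Hn.
rewrite -leqNgt; have -> : 1 = #|[set z]| by rewrite cards1.
apply: subset_leq_card; apply/subsetP => w Hw.
by move: (Hn w); rewrite Hw /= negbK inE.
Qed.

Theorem proposition3p6 (T : finType) (e : rel T) (k : nat) :
  simple_graph e -> 0 < #|T| -> 2 <= k -> regular e k -> bipartite e ->
  chi_ei e = 2.
Proof.
move=> [esym eirr] HT Hk Hreg [A HA].
have Hn : forall v z, exists w, e v w && (w != z).
  move=> v z; have := Hreg v; move=> Hc.
  have [|w /andP [Hw Hwz]] := @other_elt T [set w | e v w] z; first by rewrite Hc.
  by exists w; rewrite inE in Hw; rewrite Hw Hwz.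
have H2 : has_ei_coloring e 2.
  apply/has_ei_coloringP.
  have Hlt : forall b : bool, (b : nat) < 2 by case.
  exists (fun x => Ordinal (Hlt (x \in A))) => u v.
  rewrite /P4_ends => /existsP [x /existsP [y /and4P [Hux Hxy Hyv _]]].
  apply/negP => /eqP [] Euv.
  move: (HA _ _ Hux) (HA _ _ Hxy) (HA _ _ Hyv).
  by case: (u \in A) Euv; case: (v \in A); case: (x \in A); case: (y \in A).
have Hno : forall n, n < 2 -> ~~ has_ei_coloring e n.
  move=> n Hn2; apply/has_ei_coloringP => [[f Hf]].
  case/card_gt0P: HT => u _.
  have [x /andP [Hux _]] := Hn u u.
  have [y /andP [Hxy Hyu]] := Hn x u.
  have [v /andP [Hyv Hvx]] := Hn y x.
  have Hvu : v != u.
    apply/eqP => Evu; subst v.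
    move: (HA _ _ Hux) (HA _ _ Hxy) (HA _ _ Hyv).
    by case: (u \in A); case: (x \in A); case: (y \in A).
  have HP : P4_ends e u v.
    apply/existsP; exists x; apply/existsP; exists y.
    rewrite Hux Hxy Hyv /= !inE !negb_or.
    have Hux' : u != x by apply/eqP => E; subst; rewrite eirr in Hux.
    have Hxy' : x != y by apply/eqP => E; subst; rewrite eirr in Hxy.
    have Hyv' : y != v by apply/eqP => E; subst; rewrite eirr in Hyv.
    by rewrite Hux' eq_sym Hyu eq_sym Hvu Hxy' eq_sym Hvx Hyv'.
  move: (Hf u v HP); case: n f {Hf} Hn2 => [|[|//]] f _; first by case: (f u).
  move=> H; case/negP: H; apply/eqP/val_inj.
  by move: (ltn_ord (f u)) (ltn_ord (f v)) => /=; rewrite !ltnS !leqn0 => /eqP /= -> /eqP ->.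
rewrite /chi_ei; case: ex_minnP => m Hm Hmin.
apply/eqP; rewrite eqn_leq Hmin //=.
by rewrite leqNgt; apply: contraL Hm => Hm2; apply: Hno.
Qed.
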